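(* Under the hypotheses and notation of the recursion above (birational $\Phi_n$ of $\mathbf{CP}^2$ of degree $n$ with only ordinary fundamental points, equivalent pairs $(\alpha_j,\beta_j,m_j)$, $j=1,\dots,\sigma_1$), let $$\Lambda(\lambda)=\begin{pmatrix}\lambda-n & i^{(-1)}_{\beta_1} & \cdots & i^{(-1)}_{\beta_{\sigma_1}}\\ -i_{\alpha_1} & \lambda^{m_1+1}+i_{\alpha_1\beta_1} & \cdots & i_{\alpha_1\beta_{\sigma_1}}\\ \vdots & \vdots & \ddots & \vdots\\ -i_{\alpha_{\sigma_1}} & i_{\alpha_{\sigma_1}\beta_1} & \cdots & \lambda^{m_{\sigma_1}+1}+i_{\alpha_{\sigma_1}\beta_{\sigma_1}}\end{pmatrix},$$ i.e. the $(1,1)$ entry is $\lambda-n$, the $(1,l+1)$ entry is $i^{(-1)}_{\beta_l}$, the $(j+1,1)$ entry is $-i_{\alpha_j}$, and the $(j+1,l+1)$ entry is $i_{\alpha_j\beta_l}+\delta_{jl}\lambda^{m_j+1}$. Then $\det\Lambda(\lambda)=\lambda^m+\sum_{i=0}^{m-1}a_i\lambda^i$ is a monic polynomial with integer coefficients of degree $m=m_1+\dots+m_{\sigma_1}+\sigma_1+1$, and the degrees $d(k)=\deg\Phi_n^k$ satisfy the autonomous linear difference equation $$d(k+m)+\sum_{i=0}^{m-1}a_i\,d(k+i)=0\qquad(k\ge 0 \text{ sufficiently large for all terms to be defined by the recursion}).$$ Consequently $d(k)=\sum_{i=1}^{l}\lambda_i^k\sum_{j=0}^{s_i-1}c_{ij}k^j$,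 where $\lambda_1,\dots,\lambda_l$ are the distinct roots of $\det\Lambda(\lambda)=0$ with multiplicities $s_1,\dots,s_l$ and the constants $c_{ij}$ are determined by the initial values $d(1),\dots,d(m)$; in particular, if all roots satisfy $|\lambda_i|=1$ then $d(k)$ grows at most polynomially in $k$.
   Context: A birational map $\Phi_n$ of $\mathbf{CP}^2$ is written $z\mapsto z'$, $z'_1:z'_2:z'_3=\phi_1(z):\phi_2(z):\phi_3(z)$, with $\phi_i$ coprime homogeneous polynomials of degree $n$, inverse of the same form; $d(k)=\deg\Phi_n^k$. Fundamental points $O_\alpha$ (multiplicities $i_\alpha$) of $\Phi_n$ and $O^{(-1)}_\beta$ (multiplicities $i^{(-1)}_\beta$) of $\Phi_n^{-1}$, $\alpha,\beta=1,\dots,\sigma$, all assumed ordinary; $i_{\alpha\beta}$ is the multiplicity at $O_\alpha$ of the principal curve $J_\beta$ contracted by $\Phi_n$ to $O^{(-1)}_\beta$. The equivalent pairs are the $\sigma_1$ pairs $(O_{\alpha_j},O^{(-1)}_{\beta_j})$ with $\Phi_n^{-m_j}(O_{\alpha_j})=O^{(-1)}_{\beta_j}$, $m_j\ge 0$, all other fundamental points having backward orbits under $\Phi_n^{-1}$ that never meet $\{O^{(-1)}_\beta\}$. The multiplicities $\gamma_\alpha(k)$ of a general member of the linear system of $\Phi_n^k$ at $O_\alpha$ and $d(k)$ satisfy $d(0)=1$, $d(1)=n$, $\gamma_\alpha(1)=i_\alpha$, $\gamma_\alpha(k)=0$ for $k\le0$, $d(k)=n\,d(k-1)-\sum_{l=1}^{\sigma_1}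 i^{(-1)}_{\beta_l}\gamma_{\alpha_l}(k-m_l-1)$ and $\gamma_{\alpha_j}(k)=i_{\alpha_j}d(k-1)-\sum_{l=1}^{\sigma_1} i_{\alpha_j\beta_l}\gamma_{\alpha_l}(k-m_l-1)$. *)

(* Defs.v *)
From HB Require Import structures.
From mathcomp Require Import all_boot all_order all_algebra all_field.
Set Implicit Arguments. Unset Strict Implicit. Unset Printing Implicit Defensive.
Import Order.TTheory GRing.Theory Num.Theory.
Local Open Scope ring_scope.

(* Row/column 0 is the first row/column; row j+1 / column l+1 correspond to
   the equivalent pairs j, l : 'I_sigma1.
   - ii  a      : multiplicity i_a of the fundamental point O_a of Phi_n
   - iinv b     : multiplicity i^{(-1)}_b of O^{(-1)}_b
   - iab a b    : multiplicity i_{ab} at O_a of the principal curve J_b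
   - alpha, beta : the equivalent pairs (O_{alpha_j}, O^{(-1)}_{beta_j})
   - mm j       : the integer m_j *)
Definition Lambda (n sigma sigma1 : nat) (ii iinv : 'I_sigma -> nat)
  (iab : 'I_sigma -> 'I_sigma -> nat) (alpha beta : 'I_sigma1 -> 'I_sigma)
  (mm : 'I_sigma1 -> nat) : 'M[{poly int}]_(sigma1.+1) :=
  \matrix_(r < sigma1.+1, c < sigma1.+1)
    match unlift ord0 r, unlift ord0 c with
    | None, None => 'X - (n%:R)%:P
    | None, Some l => ((iinv (beta l))%:R)%:P
    | Some j, None => - ((ii (alpha j))%:R)%:P
    | Some j, Some l =>
        ((iab (alpha j) (beta l))%:R)%:P + (j == l)%:R * 'X^((mm j).+1)
    end.

Definition degm (sigma1 : nat) (mm : 'I_sigma1 -> nat) : nat :=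
  (\sum_(j < sigma1) (mm j).+1).+1.

(* Main.v *)
Require Import Defs.
From HB Require Import structures.
From mathcomp Require Import all_boot all_order all_algebra all_field.
From Stdlib Require Import Lia IndefiniteDescription.
Import Order.TTheory GRing.Theory Num.Theory.
Local Open Scope ring_scope.

Section Act.
Variable R : comNzRingType.
Implicit Types (p q : {poly R}) (u v : nat -> R) (k : nat).

Definition act (p : {poly R}) (u : nat -> R) (k : nat) : R :=
  \sum_(i < size p) p`_i * u (k + i)%N.

Lemma act_wide N p u k : (size p <= N)%N ->
  act p u k = \sum_(i < N) p`_i * u (k + i)%N.
Proof.
move=> hN; rewrite /act (big_ord_widen N (fun i => p`_i * u (k + i)%N) hN).
rewrite big_mkcond /=; apply: eq_bigr => i _.
by case: ifP => // /negbT; rewrite -leqNgt => h; rewrite nth_default // mul0r.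
Qed.

Lemma actD p q u k : act (p + q) u k = act p u k + act q u k.
Proof.
set N := maxn (size p) (size q).
rewrite (@act_wide N) ?(leq_trans (size_polyD _ _)) //.
rewrite (@act_wide N p) ?leq_maxl // (@act_wide N q) ?leq_maxr //.
by rewrite -big_split /=; apply: eq_bigr => i _; rewrite coefD mulrDl.
Qed.

Lemma actZ c p u k : act (c *: p) u k = c * act p u k.
Proof.
rewrite (@act_wide (size p)) ?size_scale_leq // /act mulr_sumr.
by apply: eq_bigr => i _; rewrite coefZ mulrA.
Qed.

Lemma act0 u k : act 0 u k = 0.
Proof. by rewrite /act size_poly0 big_ord0. Qed.

Lemma actN p u k : act (- p) u k = - act p u k.
Proof. by rewrite -scaleN1r actZ mulN1r. Qed.

Lemma actB p q u k : act (p - q) u k = act p u k - act q u k.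
Proof. by rewrite actD actN. Qed.

Lemma actC c u k : act c%:P u k = c * u k.
Proof.
rewrite (@act_wide 1) ?size_polyC_leq1 // big_ord1 coefC /= addn0 //.
Qed.

Lemma actMX p u k : act (p * 'X) u k = act p u k.+1.
Proof.
rewrite (@act_wide (size p).+1); last first.
  by rewrite (leq_trans (size_polyMleq _ _)) // size_polyX addn2.
rewrite big_ord_recl coefMX /= mul0r add0r /act; apply: eq_bigr => i _.
by rewrite coefMX /= /bump /= add1n addnS.
Qed.

Lemma actXn n u k : act 'X^n u k = u (k + n)%N.
Proof.
elim: n k => [|n IH] k; first by rewrite expr0 -[1]/(1%:P) actC mul1r addn0.
by rewrite exprSr actMX IH addSnnS.
Qed.

Lemma act_sum I (r : seq I) (F : I -> {poly R}) u k :
  act (\sum_(i <- r) F i) u k = \sum_(i <- r) act (F i) u k.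
Proof.
elim: r => [|a r IH]; first by rewrite !big_nil act0.
by rewrite !big_cons actD IH.
Qed.

Lemma act_ext p u v k : (forall j, u j = v j) -> act p u k = act p v k.
Proof. by move=> h; apply: eq_bigr => i _; rewrite h. Qed.

Lemma act_sumu I (r : seq I) p (F : I -> nat -> R) k :
  act p (fun j => \sum_(i <- r) F i j) k = \sum_(i <- r) act p (F i) k.
Proof.
rewrite /act exchange_big /=; apply: eq_bigr => i _; by rewrite mulr_sumr.
Qed.

Lemma actM p q u k : act (p * q) u k = act p (act q u) k.
Proof.
elim/poly_ind: p q u k => [|p c IH] q u k.
  by rewrite mul0r !act0.
rewrite mulrDl -mulrA actD IH mul_polyC actZ actD actC actMX.
congr (_ + _); apply: eq_bigr => i _; by rewrite [_ * q]mulrC actMX addSn.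
Qed.

Lemma act_zero p k : act p (fun _ => 0) k = 0.
Proof. by rewrite /act big1 // => i _; rewrite mulr0. Qed.

Lemma act_det n (M : 'M[{poly R}]_n) (x : 'I_n -> nat -> R) :
  (forall r k, \sum_(c < n) act (M r c) (x c) k = 0) ->
  forall i k, act (\det M) (x i) k = 0.
Proof.
move=> H i k.
have E1 : \sum_(c < n) act (((\det M)%:M) i c) (x c) k = act (\det M) (x i) k.
  rewrite (bigD1 i) //= big1 ?addr0; first by rewrite mxE eqxx mulr1n.
  by move=> c /negbTE hc; rewrite mxE eq_sym hc mulr0n act0.
rewrite -E1 -mul_adj_mx.
under eq_bigr => c _ do rewrite mxE act_sum.
rewrite exchange_big /= big1 // => r _.
under eq_bigr => c _ do rewrite actM.
by rewrite -act_sumu (@act_ext _ _ (fun _ => 0) _ (H r)) act_zero.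
Qed.
End Act.
Arguments act {R}.

Module DetAux.
From mathcomp Require Import fingroup perm.
Lemma det_monic_size (R : idomainType) n (M : 'M[{poly R}]_n) (e : 'I_n -> nat) :
  (forall i, M i i \is monic) -> (forall i, size (M i i) = (e i).+1) ->
  (forall i, (0 < e i)%N) -> (forall i j, i != j -> (size (M i j) <= 1)%N) ->
  \det M \is monic /\ size (\det M) = (\sum_i e i).+1.
Proof.
move=> hm hs he ho.
have hid : \prod_i M i i \is monic /\ size (\prod_i M i i) = (\sum_i e i).+1.
  split; first by apply: monic_prod => i _; apply: hm.
  rewrite size_prod; last by move=> i _; apply: monic_neq0.
  under eq_bigr => i _ do rewrite hs.
  have -> : (\sum_i (e i).+1 = \sum_i e i + n)%N.
    rewrite (eq_bigr (fun i => e i + 1)%N); last by move=> i _; rewrite addn1.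
    by rewrite big_split /= sum1_card cardT size_enum_ord.
  by rewrite cardT size_enum_ord -addSn addnK.
have hrest : (size (\sum_(s | s != (1 : {perm 'I_n})%g) (-1) ^+ s * \prod_i M i (s i))%R
               <= \sum_i e i)%N.
  apply: (leq_trans (size_sum _ _ _)); apply/bigmax_leqP => s hs1.
  have hsz : (size ((-1) ^+ s * \prod_i M i (s i))%R <= size (\prod_i M i (s i))%R)%N.
    by case: (odd_perm s); rewrite ?expr1 ?expr0 ?mulN1r ?mul1r ?size_polyN.
  apply: (leq_trans hsz); apply: (leq_trans (size_poly_prod_leq _ _)).
  have [i hi] : exists i, s i != i.
    apply/existsP; apply: contraR hs1 => /existsPn h; apply/eqP/permP => i.
    by rewrite perm1; apply/eqP; move: (h i); rewrite negbK.
  set f := fun j : 'I_n => if s j == j then e j else 0%N.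
  have h1 : (\sum_j size (M j (s j)) <= \sum_j f j + n)%N.
    apply: (@leq_trans (\sum_j (f j + 1))%N); last by rewrite big_split /= sum1_card cardT size_enum_ord.
    apply: leq_sum => j _.
    rewrite /f; case: eqP => [->|/eqP hj]; first by rewrite hs addn1.
    by rewrite add0n ho // eq_sym.
  have h2 : (\sum_j f j < \sum_j e j)%N.
    rewrite (bigD1 i) //= [X in (_ < X)%N](bigD1 i) //= /f (negbTE hi) add0n.
    apply: (@leq_trans (e i + \sum_(j | j != i) f j)%N).
      by rewrite -[X in (X < _)%N]add0n -addSn leq_add2r he.
    by rewrite leq_add2l; apply: leq_sum => j _; rewrite /f; case: ifP.
  rewrite cardT size_enum_ord; move: h1 h2; set a := (\sum_j _)%N; 
  set b := (\sum_j f j)%N; set c := (\sum_j e j)%N => h1 h2.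
  rewrite leq_subLR; apply: (leq_ltn_trans h1); by rewrite addnC ltn_add2l.
have -> : \det M = \prod_i M i i + \sum_(s | s != (1 : {perm 'I_n})%g) (-1) ^+ s * \prod_i M i (s i).
  rewrite /determinant (bigD1 1%g) //= odd_perm1 expr0 mul1r; congr (_ + _).
  by apply: eq_bigr => i _; rewrite perm1.
case: hid => hm1 hs1.
have hlt : (size (\sum_(s | s != (1 : {perm 'I_n})%g) (-1) ^+ s * \prod_i M i (s i))%R < size (\prod_i M i i)%R)%N.
  by rewrite hs1 ltnS.
split; first by rewrite monicE lead_coefDl // -monicE.
by rewrite size_polyDl.
Qed.
End DetAux.

Section Lam.
Variables (n sigma sigma1 : nat) (ii iinv : 'I_sigma -> nat)
  (iab : 'I_sigma -> 'I_sigma -> nat) (alpha beta : 'I_sigma1 -> 'I_sigma)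
  (mm : 'I_sigma1 -> nat).

Definition eL (r : 'I_sigma1.+1) : nat :=
  match unlift ord0 r with None => 1%N | Some l => (mm l).+1 end.

Lemma Lambda_monic_size :
  \det (Lambda n ii iinv iab alpha beta mm) \is monic /\
  size (\det (Lambda n ii iinv iab alpha beta mm)) = (degm mm).+1.
Proof.
have -> : degm mm = (\sum_r eL r)%N.
  by rewrite big_ord_recl /eL unlift_none /= add1n; congr _.+1; apply: eq_bigr => l _; rewrite liftK.
apply: DetAux.det_monic_size.
- move=> r; rewrite mxE; case: (unliftP ord0 r) => [j _|_].
    by rewrite eqxx mul1r addrC monicXnaddC.
  exact: monicXsubC.
- move=> r; rewrite mxE /eL; case: (unliftP ord0 r) => [j _|_].
    by rewrite eqxx mul1r addrC size_XnaddC.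
  exact: size_XsubC.
- by move=> r; rewrite /eL; case: (unlift ord0 r).
- move=> r c hrc; rewrite mxE.
  case: (unliftP ord0 r) hrc => [j ->|->]; case: (unliftP ord0 c) => [l ->|->];
    rewrite ?liftK ?unlift_none ?eqxx // => hrc.
  + have hjl : (j == l) = false by apply/negbTE; apply: contra hrc => /eqP ->.
    by rewrite hjl mul0r addr0 size_polyC_leq1.
  + by rewrite size_polyN size_polyC_leq1.
  + by rewrite size_polyC_leq1.
Qed.
End Lam.

Lemma actX (R : comNzRingType) (u : nat -> R) (k : nat) : act 'X u k = u k.+1.
Proof. by rewrite -['X]expr1 actXn addn1. Qed.

Lemma subSm1 k m : (k.+1 - m - 1 = k - m)%N.
Proof. by rewrite subnAC subn1. Qed.

Section Rec.
Variables (n sigma sigma1 : nat) (ii iinv : 'I_sigma -> nat)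
  (iab : 'I_sigma -> 'I_sigma -> nat) (alpha beta : 'I_sigma1 -> 'I_sigma)
  (mm : 'I_sigma1 -> nat) (d : nat -> int) (gamma : 'I_sigma -> nat -> int).
Hypothesis hdrec : forall k : nat, (1 <= k)%N ->
     d k = n%:R * d k.-1
           - \sum_(l < sigma1) (iinv (beta l))%:R * gamma (alpha l) (k - (mm l) - 1)%N.
Hypothesis hgrec : forall (j : 'I_sigma1) (k : nat), (1 <= k)%N ->
     gamma (alpha j) k = (ii (alpha j))%:R * d k.-1
           - \sum_(l < sigma1) (iab (alpha j) (beta l))%:R
                                 * gamma (alpha l) (k - (mm l) - 1)%N.

Definition xs (r : 'I_sigma1.+1) : nat -> int :=
  match unlift ord0 r with None => d | Some l => fun k => gamma (alpha l) (k - mm l)%N end.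

Lemma rows_zero r k :
  \sum_(c < sigma1.+1) act (Lambda n ii iinv iab alpha beta mm r c) (xs c) k = 0.
Proof.
rewrite big_ord_recl !mxE /xs unlift_none.
under eq_bigr => l _ do rewrite !mxE liftK.
case: (unliftP ord0 r) => [j _|_].
- rewrite actN actC.
  under eq_bigr => l _ do rewrite actD actC.
  rewrite big_split /=.
  have -> : \sum_(l < sigma1) act ((j == l)%:R * 'X^((mm j).+1)) (fun k0 => gamma (alpha l) (k0 - mm l)%N) k = gamma (alpha j) k.+1.
    rewrite (bigD1 j) //= big1 ?addr0; first by rewrite eqxx mul1r actXn addnS -addSn addnK.
    by move=> l /negbTE hl; rewrite eq_sym hl mul0r act0.
  rewrite hgrec //=.
  under [X in _ - X]eq_bigr => l _ do rewrite subSm1.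
  by rewrite addrCA addKr addrN.
- rewrite actB actX actC.
  under eq_bigr => l _ do rewrite actC.
  rewrite hdrec //= (eq_bigr (fun l => (iinv (beta l))%:R * gamma (alpha l) (k - mm l)%N)); last by move=> l _; rewrite subSm1.
  by rewrite [X in X + _]addrAC subrr add0r addNr.
Qed.

Lemma rec_P k : act (\det (Lambda n ii iinv iab alpha beta mm)) d k = 0.
Proof.
have := @act_det _ _ (Lambda n ii iinv iab alpha beta mm) xs rows_zero ord0 k.
by rewrite /xs unlift_none.
Qed.
End Rec.

Section PS.
Implicit Types (g h : {poly algC}).

Lemma coef_XaddC1 t j : ((('X + 1) ^+ t : {poly algC}))`_j = ('C(t, j))%:R.
Proof.
elim: t j => [|t IH] j.
  by rewrite expr0 coef1 bin0n; case: (j == 0%N).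
rewrite exprSr mulrDr mulr1 coefD coefMX !IH; case: j => [|j] /=.
  by rewrite add0r !bin0.
by rewrite binS natrD addrC.
Qed.

Definition rr t : {poly algC} := ('X + 1) ^+ t - 'X^t.

Lemma coef_rr_big t j : (t <= j)%N -> (rr t)`_j = 0.
Proof.
move=> htj; rewrite /rr coefB coef_XaddC1 coefXn.
case: (ltngtP t j) htj => // [hlt _|<- _]; last by rewrite binn subrr.
by rewrite bin_small // subrr.
Qed.

Lemma coef_rr_S s : (rr s.+1)`_s = (s.+1)%:R.
Proof. by rewrite /rr coefB coef_XaddC1 coefXn binSn (ltn_eqF (ltnSn s)) subr0. Qed.

Lemma comp_Xn t (q : {poly algC}) : 'X^t \Po q = q ^+ t.
Proof.
elim: t => [|t IH]; first by rewrite !expr0 comp_polyC.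
by rewrite !exprSr comp_polyM IH comp_polyX.
Qed.

Variables (w z : algC).
Definition TT g := w *: (g \Po ('X + 1)) - z *: g.

Lemma TTD g h : TT (g + h) = TT g + TT h.
Proof. by rewrite /TT comp_polyD !scalerDr opprD addrACA. Qed.

Lemma TTZ c g : TT (c *: g) = c *: TT g.
Proof. by rewrite /TT comp_polyZ scalerBr !scalerA mulrC [z * c]mulrC. Qed.

Lemma TT_Xn t : TT 'X^t = (w - z) *: 'X^t + w *: rr t.
Proof.
by rewrite /TT comp_Xn /rr scalerBl scalerBr [RHS]addrC addrA subrK.

Qed.

Lemma TT_horner g k : w ^+ k.+1 * g.[k.+1%:R] - z * (w ^+ k * g.[k%:R])
   = w ^+ k * (TT g).[k%:R].
Proof.
rewrite /TT hornerD hornerN !hornerZ horner_comp hornerD hornerX -polyC1 hornerC -natr1 exprS mulrBr.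
by rewrite !mulrA [w * _]mulrC [z * _]mulrC.

Qed.

Hypothesis wnz : w != 0.

Lemma PS_aux s : forall h, (size h <= s)%N ->
  exists g, (size g <= s + (w == z))%N /\ TT g = h.
Proof.
elim: s => [|s IH] h hs.
  exists 0; split; first by rewrite size_poly0.
  move: hs; rewrite leqn0 size_poly_eq0 => /eqP ->.
  by rewrite /TT comp_poly0 !scaler0 subrr.
set a := h`_s.
case: (eqVneq w z) => [ewz|nwz].
- set c := a / (w * (s.+1)%:R).
  have hwS : w * (s.+1)%:R != 0 by rewrite mulf_neq0 // pnatr_eq0.
  have hT : TT (c *: 'X^(s.+1)) = (c * w) *: rr s.+1.
    by rewrite TTZ TT_Xn ewz subrr scale0r add0r scalerA.
  have hsz : (size (h - TT (c *: 'X^(s.+1)))%R <= s)%N.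
    apply/leq_sizeP => j hj; rewrite hT coefB coefZ.
    case: (ltngtP s j) hj => // [hlt _|<- _].
      by rewrite coef_rr_big // (leq_sizeP _ _ hs) // mulr0 subr0.
    rewrite coef_rr_S /c -[_ * _ * s.+1%:R]mulrA divfK //.
    by rewrite subrr.
  have [g1 [hg1 Tg1]] := IH _ hsz.
  exists (c *: 'X^(s.+1) + g1); split.
    rewrite ewz eqxx addn1 in hg1; change (nat_of_bool true) with 1%N; rewrite addn1.
    apply: (leq_trans (size_polyD _ _)); rewrite geq_max; apply/andP; split.
      by apply: (leq_trans (size_scale_leq _ _)); rewrite size_polyXn.
    by apply: (leq_trans hg1).
  by rewrite TTD Tg1 addrC subrK.
- set c := a / (w - z).
  have hwz : w - z != 0 by rewrite subr_eq0.
  have hT : TT (c *: 'X^s) = (c * (w - z)) *: 'X^s + (c * w) *: rr s.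
    by rewrite TTZ TT_Xn scalerDr !scalerA.
  have hsz : (size (h - TT (c *: 'X^s))%R <= s)%N.
    apply/leq_sizeP => j hj; rewrite hT coefB coefD !coefZ coefXn coef_rr_big //.
    rewrite mulr0 addr0; case: (ltngtP s j) hj => // [hlt _|<- _].
      by rewrite (leq_sizeP _ _ hs) // mulr0 subr0.
    by rewrite ?eqxx mulr1 /c divfK // subrr.
  have [g1 [hg1 Tg1]] := IH _ hsz.
  exists (c *: 'X^s + g1); split.
    rewrite (negbTE nwz) addn0 in hg1; change (nat_of_bool false) with 0%N; rewrite addn0.
    apply: (leq_trans (size_polyD _ _)); rewrite geq_max; apply/andP; split.
      by apply: (leq_trans (size_scale_leq _ _)); rewrite size_polyXn.
    by apply: (leq_trans hg1).
  by rewrite TTD Tg1 addrC subrK.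
Qed.
End PS.

Lemma PS (w z : algC) (h : {poly algC}) :
  exists g : {poly algC}, (size g <= size h + (w == z))%N /\
    forall k, (0 < k)%N || (h == 0) ->
      w ^+ k.+1 * g.[k.+1%:R] - z * (w ^+ k * g.[k%:R]) = w ^+ k * h.[k%:R].
Proof.
case: (eqVneq w 0) => [->|wnz].
  exists 0; split; first by rewrite size_poly0.
  move=> k /orP [hk|/eqP ->]; last by rewrite !horner0 !mulr0 subrr.
  by rewrite !horner0 !mulr0 subrr expr0n (gtn_eqF hk) mul0r.
have [g [hg Tg]] := @PS_aux w z wnz (size h) h (leqnn _).
exists g; split => // k _; by rewrite TT_horner Tg.
Qed.

Lemma act1 (R : comNzRingType) (u : nat -> R) (k : nat) : act 1 u k = u k.
Proof. by rewrite -polyC1 actC mul1r. Qed.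

Lemma Gen (rs : seq algC) : forall u : nat -> algC,
  (forall k, act (\prod_(z <- rs) ('X - z%:P)) u k = 0) ->
  exists f : algC -> {poly algC}, (forall w, (size (f w) <= count_mem w rs)%N) /\
    forall k, (size rs <= k)%N -> u k = \sum_(w <- undup rs) w ^+ k * (f w).[k%:R].
Proof.
elim: rs => [|z rs IH] u hu.
  exists (fun _ => 0); split => [w|k _]; first by rewrite size_poly0.
  by move: (hu k); rewrite big_nil act1 big_nil.
set v := fun k => u k.+1 - z * u k.
have hv : forall k, act (\prod_(z <- rs) ('X - z%:P)) v k = 0.
  move=> k; move: (hu k); rewrite big_cons mulrC actM.
  by move=> <-; apply: act_ext => j; rewrite actB actX actC.
have [f' [hf's hf']] := IH v hv.
have hPS := fun w => PS w z (f' w).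
pose gg w := proj1_sig (constructive_indefinite_description _ (hPS w)).
have hgg := fun w => proj2_sig (constructive_indefinite_description _ (hPS w)).
have ggs : forall w, (size (gg w) <= size (f' w) + (w == z))%N.
  by move=> w; exact: (proj1 (hgg w)).
have ggk : forall w k, (0 < k)%N || (f' w == 0) ->
    w ^+ k.+1 * (gg w).[k.+1%:R] - z * (w ^+ k * (gg w).[k%:R]) = w ^+ k * (f' w).[k%:R].
  by move=> w; exact: (proj2 (hgg w)).
clear hgg; clearbody gg.
set N := size rs.
pose y k := \sum_(w <- undup (z :: rs)) w ^+ k * (gg w).[k%:R].
have hY : forall k, (N <= k)%N -> y k.+1 - z * y k = v k.
  move=> k hk; rewrite /y mulr_sumr -sumrB (hf' k hk).
  rewrite big_seq [RHS]big_seq_cond.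
  have -> : \sum_(i <- undup (z :: rs) | i \in undup (z :: rs))
        (i ^+ k.+1 * (gg i).[k.+1%:R] - z * (i ^+ k * (gg i).[k%:R]))
      = \sum_(i <- undup (z :: rs) | i \in undup (z :: rs)) i ^+ k * (f' i).[k%:R].
    apply: eq_bigr => w; rewrite mem_undup => hw; apply: ggk.
    case: (boolP (w \in rs)) => [wrs|wnrs].
      have : (0 < size rs)%N by move: wrs; case: (rs).
      by move=> h0; rewrite (leq_trans h0 hk).
    apply/orP; right; rewrite -size_poly_eq0 -leqn0.
    by apply: (leq_trans (hf's w)); rewrite (count_memPn wnrs).
  rewrite -big_seq -big_seq_cond /=; case: ifP => // hz.
  have hz0 : f' z = 0.
    by apply/eqP; rewrite -size_poly_eq0 -leqn0; apply: (leq_trans (hf's z)); rewrite (count_memPn (negbT hz)).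
  by rewrite big_cons hz0 horner0 mulr0 add0r.
pose e k := u k - y k.
have he : forall k, (N <= k)%N -> e k.+1 = z * e k.
  move=> k hk; rewrite /e; move: (hY k hk); rewrite /v => hYk.
  have -> : y k.+1 = u k.+1 - z * u k + z * y k by rewrite -hYk subrK.
  by rewrite opprD opprB addrA [u k.+1 + _]addrC subrK mulrBr.
have hE : forall i, e (N + i)%N = z ^+ i * e N.
  elim => [|i IHi]; first by rewrite addn0 expr0 mul1r.
  by rewrite addnS he ?leq_addr // IHi exprS mulrA.
have huy : forall k, u k = y k + e k by move=> k; rewrite /e addrC subrK.
have cnt : forall w, count_mem w (z :: rs) = ((w == z) + count_mem w rs)%N.
  by move=> w; rewrite /= eq_sym.
case: (eqVneq z 0) => [z0|znz].
  exists gg; split.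
    by move=> w; rewrite cnt addnC; apply: (leq_trans (ggs w)); rewrite leq_add2r hf's.
  move=> k hk; have hk' : (N < k)%N by exact: hk.
  rewrite huy.
  have -> : e k = 0.
    by rewrite -(subnKC (ltnW hk')) hE z0 expr0n subn_eq0 leqNgt hk' mul0r.
  by rewrite addr0.
set C := e N / z ^+ N.
exists (fun w => gg w + ((w == z)%:R * C)%:P); split.
  move=> w; apply: (leq_trans (size_polyD _ _)); rewrite geq_max; apply/andP; split.
    by rewrite cnt addnC; apply: (leq_trans (ggs w)); rewrite leq_add2r hf's.
  case: (eqVneq w z) => [->|wnz]; last by rewrite mul0r size_poly0.
  by rewrite cnt eqxx (leq_trans (size_polyC_leq1 _)).
move=> k hk; have hk' : (N < k)%N by exact: hk.
rewrite huy.
under eq_bigr => w _ do rewrite hornerD hornerC mulrDr.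
rewrite big_split /=; congr (_ + _).
have zin : z \in undup (z :: rs) by rewrite mem_undup mem_head.
have uu := undup_uniq (z :: rs).
rewrite (bigD1_seq z zin uu) /=; rewrite eqxx mul1r big1 ?addr0; last first.
  by move=> w /negbTE ->; rewrite mul0r mulr0.
rewrite -(subnKC (ltnW hk')) hE /C exprD mulrCA -mulrA mulrC; congr (_ * _).
by rewrite mulrC divfK // expf_neq0.
Qed.

Lemma pow_mono (k j m : nat) : (j <= m)%N -> (k ^ j <= k.+1 ^ m)%N.
Proof.
move=> hjm; apply: (@leq_trans (k.+1 ^ j)); last exact: leq_pexp2l.
by case: j {hjm} => [|j]; rewrite ?expn0 // leq_exp2r.
Qed.

Theorem theorem1
  (n sigma sigma1 : nat) (ii iinv : 'I_sigma -> nat)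
  (iab : 'I_sigma -> 'I_sigma -> nat) (alpha beta : 'I_sigma1 -> 'I_sigma)
  (mm : 'I_sigma1 -> nat)
  (d : nat -> int) (gamma : 'I_sigma -> nat -> int)
  (hd0 : d 0%N = 1) (hd1 : d 1%N = n%:R)
  (hg0 : forall a, gamma a 0%N = 0)
  (hg1 : forall a, gamma a 1%N = (ii a)%:R)
  (hdrec : forall k : nat, (1 <= k)%N ->
     d k = n%:R * d k.-1
           - \sum_(l < sigma1) (iinv (beta l))%:R * gamma (alpha l) (k - (mm l) - 1)%N)
  (hgrec : forall (j : 'I_sigma1) (k : nat), (1 <= k)%N ->
     gamma (alpha j) k = (ii (alpha j))%:R * d k.-1
           - \sum_(l < sigma1) (iab (alpha j) (beta l))%:R
                                 * gamma (alpha l) (k - (mm l) - 1)%N) :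
  let P := \det (Lambda n ii iinv iab alpha beta mm) in
  let m := degm mm in
  [/\ P \is monic,
      size P = m.+1,
      (forall k : nat, \sum_(i < m.+1) P`_i * d (k + i)%N = 0),
      (forall rs : seq algC,
         map_poly intr P = \prod_(z <- rs) ('X - z%:P) ->
         exists c : algC -> nat -> algC,
           forall k : nat, (m <= k)%N ->
             (d k)%:~R = \sum_(z <- undup rs)
                           z ^+ k * \sum_(j < count_mem z rs) c z j * (k%:R) ^+ j)
    & ((forall z : algC, root (map_poly intr P) z -> `|z| = 1) ->
       exists C e : nat, forall k : nat, `|d k| <= (C * k.+1 ^ e)%:R)].
Proof.
move=> P m.
have [hmon hsize] : P \is monic /\ size P = m.+1 :=
  @Lambda_monic_size n sigma sigma1 ii iinv iab alpha beta mm.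
have hrec : forall k, act P d k = 0 :=
  @rec_P n sigma sigma1 ii iinv iab alpha beta mm d gamma hdrec hgrec.
have hsm : size (map_poly intr P : {poly algC}) = size P.
  by apply: size_map_inj_poly; [exact: intr_inj | rewrite mulr0z].
have hmap : forall k, act (map_poly intr P : {poly algC}) (fun j => (d j)%:~R) k = 0.
  move=> k; have := congr1 (fun x : int => x%:~R : algC) (hrec k).
  rewrite /= mulr0z => <-; rewrite /act hsm [RHS]rmorph_sum; apply: eq_bigr => i _.
  by rewrite coef_map /= rmorphM.
have gen : forall rs : seq algC, map_poly intr P = \prod_(z <- rs) ('X - z%:P) ->
   size rs = m /\ exists f : algC -> {poly algC},
      (forall w, (size (f w) <= count_mem w rs)%N) /\
      forall k, (m <= k)%N -> (d k)%:~R = \sum_(w <- undup rs) w ^+ k * (f w).[k%:R].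
  move=> rs hrs.
  have hsz : size rs = m.
    by have := congr1 (fun p : {poly algC} => size p) hrs; rewrite size_prod_XsubC hsm hsize => -[].
  have hu : forall k, act (\prod_(z <- rs) ('X - z%:P)) (fun j => (d j)%:~R : algC) k = 0.
    by move=> k; rewrite -hrs hmap.
  split => //; have [f [hfs hf]] := @Gen rs (fun j => (d j)%:~R) hu.
  by exists f; split => // k; rewrite -hsz; apply: hf.
split => //.
- by move=> k; rewrite -hsize; apply: hrec.
- move=> rs hrs; have [hsz [f [hfs hf]]] := gen rs hrs.
  exists (fun z j => (f z)`_j) => k hk; rewrite (hf k hk); apply: eq_bigr => w _.
  by rewrite (horner_coef_wide _ (hfs w)).
move=> hroots.
have [rs hrs] := closed_field_poly_normal (map_poly intr P : {poly algC}).
rewrite (monicP (monic_map intr hmon)) scale1r in hrs.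
have [hsz [f [hfs hf]]] := gen rs hrs.
have hz1 : forall w, w \in undup rs -> `|w| = 1.
  by move=> w; rewrite mem_undup => hw; apply: hroots; rewrite hrs root_prod_XsubC.
set B := \sum_(w <- undup rs) \sum_(j < m) `|(f w)`_j|.
have hB0 : 0 <= B by apply: sumr_ge0 => w _; apply: sumr_ge0 => j _; apply: normr_ge0.
have hbound : forall k, (m <= k)%N -> `|(d k)%:~R : algC| <= B * (k.+1)%:R ^+ m.
  move=> k hk; rewrite (hf k hk).
  apply: (le_trans (ler_norm_sum _ _ _)); rewrite /B mulr_suml.
  rewrite big_seq [X in _ <= X]big_seq; apply: ler_sum => w hw.
  rewrite normrM normrX hz1 // expr1n mul1r.
  have hfw : (size (f w) <= m)%N by rewrite -hsz (leq_trans (hfs w)) ?count_size.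
  rewrite (horner_coef_wide _ hfw) mulr_suml.
  apply: (le_trans (ler_norm_sum _ _ _)); apply: ler_sum => j _.
  rewrite normrM normrX normr_nat; apply: ler_wpM2l; first exact: normr_ge0.
  by rewrite -!natrX ler_nat pow_mono // ltnW.
set Cb := Num.bound B.
have hCb : B < Cb%:R := archi_boundP hB0.
set D0 := (\sum_(i < m) `|d i|%N)%N.
exists (Cb + D0)%N, m => k.
case: (ltnP k m) => hk.
  rewrite natz -abszE lez_nat.
  apply: (@leq_trans (Cb + D0)); last by rewrite leq_pmulr // expn_gt0.
  apply: (@leq_trans D0); last exact: leq_addl.
  by rewrite /D0 (bigD1 (Ordinal hk)) //= leq_addr.
rewrite -(ler_int algC) intr_norm natz.
apply: (le_trans (hbound k hk)).
have -> : (((Cb + D0) * k.+1 ^ m)%N%:Z)%:~R = ((Cb + D0)%:R * (k.+1)%:R ^+ m : algC).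
  by rewrite -[LHS]/(((Cb + D0) * k.+1 ^ m)%N%:R : algC) natrM natrX.
apply: ler_wpM2r; first by apply: exprn_ge0; apply: ler0n.
apply: (le_trans (ltW hCb)); by rewrite ler_nat leq_addr.
Qed.
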